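(* Let $\mathbf{F}_{\Phi}$ be a fence over the Cantor space $\mathbf{C}$, where $\Phi=(\varphi^L,\varphi^U)$. (1) If $\mathbf{F}_{\Phi}$ is a Scissorhand fence, then the set $\mathbf{D}_1=\{x\in\mathbf{C} : \mathbf{F}_{\Phi}(x)\text{ is a singleton}\}$ is a dense $G_\delta$ subset of $\mathbf{C}$. (2) If $\mathbf{F}_{\Phi}$ is a two-sided Scissorhand fence, then the set $\mathbf{D}_2=\{(x,y)\in\mathbf{F}_{\Phi} : \mathbf{F}_{\Phi}(x)=\{y\}\}$ is a dense $G_\delta$ subset of $\mathbf{F}_{\Phi}$.
   Context: $\mathbf{C}$ denotes the Cantor space. For $\Phi=(\varphi^L,\varphi^U)$ with $\varphi^L,\varphi^U:\mathbf{C}\to[0,1]$, $\varphi^L$ lower semicontinuous, $\varphi^U$ upper semicontinuous and $\varphi^L\le\varphi^U$, the fence is $\mathbf{F}_{\Phi}=\{(x,t)\in\mathbf{C}\times[0,1]:\varphi^L(x)\le t\le\varphi^U(x)\}$, and for $x\in\mathbf{C}$, $\mathbf{F}_{\Phi}(x)=\{t\in[0,1]:(x,t)\in\mathbf{F}_{\Phi}\}$. A fence $\mathbf{F}_{\Phi}$ is a Scissorhand fence if the graph $\{(x,\varphi^U(x)):x\in\mathbf{C}\}$ is dense in $\mathbf{F}_{\Phi}$ and $\{x\in\mathbf{C}:\varphi^L(x)\neq\varphi^U(x)\}$ is dense in $\mathbf{C}$; it is a two-sided Scissorhand fence if in addition the graph $\{(x,\varphi^L(x)):x\in\mathbf{C}\}$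 is dense in $\mathbf{F}_{\Phi}$. *)

(* Defs.v *)
From HB Require Import structures.
From mathcomp Require Import all_boot all_order all_algebra.
From mathcomp Require Import all_classical all_reals all_analysis.
From mathcomp Require Import borel_hierarchy.
Set Implicit Arguments. Unset Strict Implicit. Unset Printing Implicit Defensive.
Import Order.TTheory GRing.Theory Num.Theory.
Import numFieldNormedType.Exports.
Local Open Scope classical_set_scope.
Local Open Scope ring_scope.

Section Fences.
Variable R : realType.

Definition lsc {T : topologicalType} (f : T -> R) :=
  forall x a, a < f x -> \forall y \near x, a < f y.
Definition usc {T : topologicalType} (f : T -> R) :=
  forall x a, f x < a -> \forall y \near x, f y < a.

Definition fence_pair (phiL phiU : cantor_space -> R) :=
  [/\ forall x, 0 <= phiL x /\ phiL x <= 1,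
      forall x, 0 <= phiU x /\ phiU x <= 1,
      lsc phiL, usc phiU & forall x, phiL x <= phiU x].

Definition fence (phiL phiU : cantor_space -> R) : set (cantor_space * R) :=
  [set p | 0 <= p.2 <= 1 /\ phiL p.1 <= p.2 <= phiU p.1].

Definition fence_at (phiL phiU : cantor_space -> R) (x : cantor_space) : set R :=
  [set t | fence phiL phiU (x, t)].

Definition graph_of (f : cantor_space -> R) : set (cantor_space * R) :=
  [set p | p.2 = f p.1].

End Fences.

(* relative notions for a subset F of a topological space (subspace topology) *)
Definition dense_in {T : topologicalType} (F D : set T) :=
  D `<=` F /\ F `<=` closure D.
Definition Gdelta_in {T : topologicalType} (F D : set T) :=
  exists2 G : (set T)^nat, (forall i, open (G i)) & D = F `&` \bigcap_i G i.

Definition scissorhand {R : realType} (phiL phiU : cantor_space -> R) :=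
  dense_in (fence phiL phiU) (graph_of phiU) /\
  dense [set x | phiL x != phiU x].

Definition two_sided_scissorhand {R : realType} (phiL phiU : cantor_space -> R) :=
  scissorhand phiL phiU /\ dense_in (fence phiL phiU) (graph_of phiL).

(* Main.v *)
Require Import Defs.
From HB Require Import structures.
From mathcomp Require Import all_boot all_order all_algebra.
From mathcomp Require Import all_classical all_reals all_analysis.
From mathcomp Require Import borel_hierarchy.
Import Order.TTheory GRing.Theory Num.Theory.
Import numFieldNormedType.Exports.
Local Open Scope classical_set_scope.
Local Open Scope ring_scope.
Set Implicit Arguments. Unset Strict Implicit.
Lemma baire_compact {T : topologicalType} (K : set T) (O : (set T)^nat) :
  @regular_space T -> compact K -> (forall n, open (O n)) ->
  (forall n, K `<=` closure (K `&` O n)) -> K `<=` closure (K `&` \bigcap_n O n).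
Proof.
move=> reg cK oO dO p Kp W Wp.
have step : forall nV : nat * set T, exists V' : set T,
  open nV.2 -> nV.2 `&` K !=set0 ->
  [/\ open V', V' `&` K !=set0 & closure V' `<=` nV.2 `&` O nV.1].
  move=> [n V] /=.
  have [oV|] := pselect (open V); last by move=> h; exists set0.
  have [[k [Vk Kk]]|] := pselect (V `&` K !=set0); last by move=> h; exists set0.
  have [q [[Kq Oq] Vq]] : (K `&` O n) `&` V !=set0.
    by apply: (dO n k Kk); apply: open_nbhs_nbhs.
  have : nbhs q (V `&` O n) by apply: open_nbhs_nbhs; split => //; exact: openI.
  move=> /(reg q) [B Bq BVO].
  exists (interior B) => _ _; split.
  - exact: open_interior.
  - by exists q; split.
  - by apply: subset_trans BVO; apply: closureS; exact: interior_subset.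
have [f Pf] := choice step.
pose fix V n := if n is m.+1 then f (m, V m) else interior W.
have HV n : open (V n) /\ V n `&` K !=set0.
  elim: n => [|n [oVn neVn]]; first by split; [exact: open_interior|exists p].
  by have [] := Pf (n, V n) oVn neVn.
have HVc n : closure (V n.+1) `<=` V n `&` O n.
  by have [_ _] := Pf (n, V n) (HV n).1 (HV n).2.
have Vdec n m : (n <= m)%N -> V m `<=` V n.
  elim: m => [|m IH]; first by rewrite leqn0 => /eqP ->.
  rewrite leq_eqVlt => /orP[/eqP -> //|/IH]; apply: subset_trans.
  by move=> x /subset_closure /HVc [].
pose F := filter_from [set: nat] (fun n => V n `&` K).
have FF : ProperFilter F.
  apply: filter_from_proper; last by move=> i _; exact: (HV i).2.
  apply: filter_from_filter; first by exists 0%N.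
  move=> i j _ _; exists (maxn i j) => //.
  move=> x [Vx Kx]; split; split => //.
    by apply: (Vdec _ _ (leq_maxl i j)).
  by apply: (Vdec _ _ (leq_maxr i j)).
have [l [Kl]] := cK F FF (ex_intro2 _ _ 0%N I (fun x => @proj2 _ _)).
rewrite clusterE => cl.
have Vl n : (V n `&` O n) l.
  have : closure (V n.+1 `&` K) l by apply: cl; exists n.+1.
  by move=> /closureI [/HVc].
exists l; split; first by split => // n _; have [] := Vl n.
by have [+ _] := Vl 0%N; apply: interior_subset.
Qed.
From mathcomp Require Import lra.

Section Main.
Variables (R : realType) (phiL phiU : cantor_space -> R).
Hypothesis fp : fence_pair phiL phiU.

Lemma diff_open (e : R) : open [set x | phiU x - phiL x < e].
Proof.
case: fp => _ _ hL hU _.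
rewrite openE => x /= hx.
pose a := (phiU x + (phiL x + e)) / 2.
have h1 := hU x a ltac:(rewrite /a; lra).
have h2 := hL x (a - e) ltac:(rewrite /a; lra).
rewrite /interior; apply: filterS2 h1 h2 => y /= ? ?; lra.
Qed.

Lemma fence_atE x t : fence_at phiL phiU x t <-> phiL x <= t <= phiU x.
Proof.
case: fp => r1 r2 _ _ _; rewrite /fence_at /fence /=; split; first by case.
move=> /andP[h1 h2]; have [? ?] := r1 x; have [? ?] := r2 x.
by split; apply/andP; split => //; lra.
Qed.

Lemma core (x1 : cantor_space) (A : set cantor_space) (e : R) :
  scissorhand phiL phiU -> nbhs x1 A -> 0 < e ->
  exists y, [/\ A y, `|phiL x1 - phiU y| < e & phiU y - phiL y < e].
Proof.
move=> [[_ dU] _] Ax1 e0.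
case: (fp) => r1 r2 hL _ leLU.
have Fx : fence phiL phiU (x1, phiL x1).
  by rewrite /fence /=; have := r1 x1; have := leLU x1; split; apply/andP; lra.
have := dU _ Fx ((A `&` [set y | phiL x1 - e / 2 < phiL y]) `*` ball (phiL x1) (e / 2)).
case.
  exists (A `&` [set y | phiL x1 - e / 2 < phiL y], ball (phiL x1) (e / 2)) => //=.
  split; last by apply: nbhsx_ballx; lra.
  by apply: filterI => //; apply: hL; lra.
move=> [y t] [ht [[Ay hy]]]; rewrite /graph_of /= in ht; move: hy => /= hy; rewrite ht -ball_normE /= => hb.
exists y; split => //; last by move: hb; rewrite ltr_norml => /andP[? ?]; lra.
by apply: lt_trans hb _; lra.
Qed.
End Main.
Lemma small0 (R : realType) (d : R) : (forall n, d < n.+1%:R^-1) -> d <= 0.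
Proof.
move=> h; rewrite leNgt; apply/negP => d0.
have := h (Num.truncn d^-1); rewrite ltNge => /negP; apply; apply: ltW.
have := truncnS_gt d^-1; rewrite invf_plt ?posrE ?invr_gt0 //.
Qed.

Lemma nbhs_lt (R : realType) (t a : R) : t < a -> nbhs t [set s | s < a].
Proof.
move=> ta; apply: filterS (nbhsx_ballx t (a - t) _); last by rewrite subr_gt0.
move=> s; rewrite -ball_normE /= ltr_norml => /andP[? ?]; lra.
Qed.

Lemma nbhs_gt (R : realType) (t a : R) : a < t -> nbhs t [set s | a < s].
Proof.
move=> ta; apply: filterS (nbhsx_ballx t (t - a) _); last by rewrite subr_gt0.
move=> s; rewrite -ball_normE /= ltr_norml => /andP[? ?]; lra.
Qed.

Section Main2.
Variables (R : realType) (phiL phiU : cantor_space -> R).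
Hypothesis fp : fence_pair phiL phiU.

Lemma fence_at1 x t : fence_at phiL phiU x = [set t] <-> phiL x = t /\ phiU x = t.
Proof.
case: (fp) => r1 r2 _ _ leLU.
split.
  move=> h; split.
    suff : [set t] (phiL x) by [].
    by rewrite -h; apply/fence_atE => //; rewrite lexx leLU.
  suff : [set t] (phiU x) by [].
  by rewrite -h; apply/fence_atE => //; rewrite lexx leLU.
move=> [hl hu]; apply/seteqP; split => s.
  by move/fence_atE => /(_ fp) /andP[]; rewrite hl hu /= => ? ?; apply/eqP; rewrite eq_le; apply/andP; split.
by move=> /= ->; apply/fence_atE => //; rewrite hl hu lexx.
Qed.

Lemma fence_closed : closed (fence phiL phiU).
Proof.
case: (fp) => r1 r2 hL hU leLU.
rewrite -openC openE => -[x t] /= nF.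
have [tl|lt] := ltP t (phiL x).
  pose a := (t + phiL x) / 2.
  exists ([set y | a < phiL y], [set s | s < a]) => /=.
    by split; [apply: hL; rewrite /a; lra | apply: nbhs_lt; rewrite /a; lra].
  by move=> [y s] [/= h1 h2] [_ /andP[/= h3 _]]; lra.
have [tu|ut] := ltP (phiU x) t.
  pose a := (t + phiU x) / 2.
  exists ([set y | phiU y < a], [set s | a < s]) => /=.
    by split; [apply: hU; rewrite /a; lra | apply: nbhs_gt; rewrite /a; lra].
  by move=> [y s] [/= h1 h2] [_ /andP[_ /= h3]]; lra.
exfalso; apply: nF; have [? ?] := r1 x; have [? ?] := r2 x.
by rewrite /fence /=; split; apply/andP; split; lra.
Qed.

End Main2.
Theorem proposition2p7 (R : realType) (phiL phiU : cantor_space -> R) :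
  fence_pair phiL phiU ->
  (scissorhand phiL phiU ->
     let D1 := [set x | exists t, fence_at phiL phiU x = [set t]] in
     dense D1 /\ Gdelta D1) /\
  (two_sided_scissorhand phiL phiU ->
     let D2 := [set p | fence phiL phiU p /\ fence_at phiL phiU p.1 = [set p.2]] in
     dense_in (fence phiL phiU) D2 /\ Gdelta_in (fence phiL phiU) D2).
Proof.
move=> fp.
pose O n := [set x : cantor_space | phiU x - phiL x < n.+1%:R^-1].
have oO n : open (O n) := diff_open fp _.
have leLU x : phiL x <= phiU x by case: fp => _ _ _ _ h.
have eqO x : (\bigcap_n O n) x <-> phiL x = phiU x.
  split.
    move=> h; have := small0 (fun n => h n I); have := leLU x => ? ?.
    by apply/eqP; rewrite eq_le; apply/andP; split; lra.
  by move=> e n _; rewrite /O /= e subrr invr_gt0 ltr0n.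
have npos n : 0 < n.+1%:R^-1 :> R by rewrite invr_gt0 ltr0n.
split.
  move=> sc D1.
  have D1E : D1 = \bigcap_n O n.
    apply/seteqP; split => x /=.
      by move=> [t /(fence_at1 fp) [h1 h2]]; apply/eqO; rewrite h1 h2.
    by move=> /eqO e; exists (phiL x); apply/fence_at1.
  split; last by rewrite D1E; exists O.
  have dn n : [set: cantor_space] `<=` closure ([set: cantor_space] `&` O n).
    move=> x _ B Bx.
    have [y [By _ hy]] := core fp sc Bx (npos n).
    by exists y; split.
  have H := baire_compact uniform_regular cantor_space_compact oO dn.
  move=> U [u Uu] oU.
  have [|v [[_ Ov] Uv]] := H u I U; first by apply: open_nbhs_nbhs; split.
  by exists v; split => //; rewrite D1E.
move=> [sc dL] D2.
pose O2 n := [set p : cantor_space * R | O n p.1].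
have oO2 n : open (O2 n).
  rewrite openE => p hp; exists (O n, setT) => /=.
    by split; [apply: open_nbhs_nbhs; split | exact: filterT].
  by move=> [y s] [hy _].
have D2E : D2 = fence phiL phiU `&` \bigcap_n O2 n.
  apply/seteqP; split => -[x t] /=.
    move=> [Fp /(fence_at1 fp) [h1 h2]]; split => // n _.
    by apply: (proj2 (eqO x)) => //; rewrite h1 h2.
  move=> [Fp hO].
  have e : phiL x = phiU x by apply/eqO => n _; exact: hO n I.
  split => //; apply/fence_at1 => //.
  move: Fp => [_ /andP[/= a b]]. split; apply/eqP; rewrite eq_le; apply/andP; split; lra.
split; last by exists O2.
split; first by move=> p [].
rewrite D2E; apply: baire_compact.
- exact: uniform_regular.
- have -> : fence phiL phiU = ([set: cantor_space] `*` `[0, 1]) `&` fence phiL phiU.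
    apply/seteqP; split => p; last by case.
    move=> Fp; split => //; split => //=; rewrite in_itv /=; exact: Fp.1.
  apply: compact_closedI; last exact: fence_closed.
  exact: compact_setX cantor_space_compact (@segment_compact _ 0 1).
- exact: oO2.
- move=> n [x t] Fp B Bp.
  case: Bp => -[P1 P2] /= [P1x /nbhs_ballP [d d0 bd]] sB.
  move: d0 => /= d0; have d20 : 0 < d / 2 by lra.
  have nb : nbhs (x, t) (P1° `*` ball t (d / 2)).
    exists (P1°, ball t (d / 2)) => //=; split; last exact: nbhsx_ballx.
    by apply: open_nbhs_nbhs; split; [exact: open_interior|].
  have [[x1 t1] [ht1 [/= P1x1 bt1]]] := dL.2 (x, t) Fp _ nb.
  rewrite /graph_of /= in ht1; rewrite ht1 -ball_normE /= in bt1.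
  pose e := Num.min (d / 2) n.+1%:R^-1.
  have e0 : 0 < e by rewrite lt_min d20 npos.
  have e1 : e <= d / 2 by rewrite ge_min lexx.
  have e2 : e <= n.+1%:R^-1 by rewrite ge_min lexx orbT.
  have [y [P1y hb hy]] := core fp sc P1x1 e0.
  exists (y, phiU y); split.
    split.
      case: (fp) => _ r2 _ _ _; have [? ?] := r2 y; have := leLU y => ?.
      by rewrite /fence /=; split; apply/andP; split => //; lra.
    by rewrite /O2 /O /=; apply: lt_le_trans hy _.
  apply: sB; split => //=; apply: bd; rewrite -ball_normE /=.
  move: hb bt1; rewrite !ltr_norml => /andP[? ?] /andP[? ?].
  by apply/andP; split; lra.
Qed.
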